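(* Let $G$ be a connected graph with $n\ge2$ nodes and diameter $D$, with nonnegative integer loads, and run Algorithm 2. If the discrepancy of $G$ at the beginning of some round is $K\ge 2D$, then after that round the potential $p(G)$ has decreased by at least $K^2/(8D)$.
   Context: $G=(V,E)$ is an undirected connected graph, $n=|V|$, $D$ its diameter; each node $u$ holds an integer load $load(u)\ge 0$. $L_{max},L_{min}$ denote the current maximum and minimum load, the discrepancy is $K=L_{max}-L_{min}$, $L_{avg}$ the average load (invariant under transfers), and the potential is $p(G)=\sum_{u\in V}(load(u)-L_{avg})^2$. Algorithm 2 (single proposal, discrete) proceeds in synchronous rounds; in each round, using the loads at the start of the round: (1) every node $u$ having at least one neighbor $v$ with $load(v)\le load(u)-2$ picks the first neighbor $v$ (in a fixed order of its neighbors) maximizing $load(u)-load(v)$ and sends $v$ a proposal of value $p_{uv}=\lfloor (load(u)-load(v))/2\rfloor$; (2) every node that received at least one proposal accepts exactly one proposal of maximum value; (3) all accepted transfers are executed simultaneously (each accepted proposal $p_{wu}$ moves $p_{wu}$ from $w$ to $u$), and nodes report their new loads to neighbors. *)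

(* Defs.v *)
From mathcomp Require Import all_boot all_order all_algebra.
Set Implicit Arguments. Unset Strict Implicit. Unset Printing Implicit Defensive.
Import Order.TTheory GRing.Theory Num.Theory.

Definition ball (T : finType) (e : rel T) (k : nat) (u : T) : {set T} :=
  iter k (fun S => S :|: [set y | [exists x in S, e x y]]) [set u].

(* Graph distance (smallest k with v in ball k u); #|T| if unreachable. *)
Definition dist (T : finType) (e : rel T) (u v : T) : nat :=
  find (fun k => v \in ball e k u) (iota 0 #|T|).

Definition diameter (T : finType) (e : rel T) : nat :=
  \max_(u : T) \max_(v : T) dist e u v.

Definition Lmax (T : finType) (l : T -> nat) : nat := \max_(u : T) l u.
Definition Lmin (T : finType) (l : T -> nat) : nat := \big[minn/Lmax l]_(u : T) l u.
Definition discrepancy (T : finType) (l : T -> nat) : nat := Lmax l - Lmin l.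

Definition avg_load (T : finType) (l : T -> int) : rat :=
  (\sum_(u : T) (l u)%:~R) / (#|T|%:R).
Definition potential (T : finType) (l : T -> int) : rat :=
  \sum_(u : T) ((l u)%:~R - avg_load l) ^+ 2.

(* Algorithm 2, one round, loads l at the start of the round.
   nbrs u is the fixed order of the neighbours of u. *)
Section Round.
Variables (T : finType) (nbrs : T -> seq T) (l : T -> nat).

Definition proposes (u : T) : bool := has (fun v => l v + 2 <= l u) (nbrs u).

(* first neighbour (in order nbrs u) maximizing l u - l v, i.e. minimizing l v *)
Definition target (u : T) : T :=
  nth u (nbrs u) (find (fun v => all (fun w => l v <= l w) (nbrs u)) (nbrs u)).

Definition pval (u : T) : nat := (l u - l (target u)) %/ 2.

Definition proposal (w v : T) : bool := proposes w && (target w == v).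

(* acc v = Some w : v accepts the proposal of w; a valid acceptance rule:
   every node receiving a proposal accepts exactly one of maximum value. *)
Definition valid_acceptance (acc : T -> option T) : Prop :=
  forall v : T,
    (acc v = None <-> (forall w, ~~ proposal w v)) /\
    (forall w, acc v = Some w ->
       proposal w v /\ (forall w', proposal w' v -> pval w' <= pval w)).

Definition new_load (acc : T -> option T) (x : T) : int :=
  (l x)%:Z
  + (if acc x is Some w then (pval w)%:Z else 0)
  - \sum_(v : T | acc v == Some x) (pval x)%:Z.

End Round.

(* Main.v *)
Require Import Defs.
From mathcomp Require Import all_boot all_order all_algebra.
From mathcomp Require Import zify ring lra.
Import Order.TTheory GRing.Theory Num.Theory.
Set Implicit Arguments. Unset Strict Implicit. Unset Printing Implicit Defensive.

Local Open Scope ring_scope.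
Section Ball.
Variables (T : finType) (e : rel T).

Lemma ballS k u : ball e k.+1 u = ball e k u :|: [set y | [exists x in ball e k u, e x y]].
Proof. by rewrite /ball iterS. Qed.

Lemma ball_sub k u : ball e k u \subset ball e k.+1 u.
Proof. by rewrite ballS subsetUl. Qed.

Lemma ball_mono j k u : (j <= k)%N -> ball e j u \subset ball e k u.
Proof.
move=> /subnK <-; elim: (k - j)%N => [|i IH] //=.
apply: subset_trans IH _; exact: subsetUl.
Qed.

Lemma ball_center k u : u \in ball e k u.
Proof.
have := ball_mono u (leq0n k); move/subsetP; apply.
by rewrite /ball /= set11.
Qed.

Lemma ball_step k u x y : x \in ball e k u -> e x y -> y \in ball e k.+1 u.
Proof. by move=> hx hy; rewrite ballS !inE; apply/orP; right; apply/existsP; exists x; rewrite hx. Qed.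

Lemma ball_path u p : path e u p -> last u p \in ball e (size p) u.
Proof.
elim/last_ind: p => [|p y IH] /=; first by rewrite /ball /= set11.
rewrite rcons_path last_rcons size_rcons => /andP [hp he].
exact: ball_step (IH hp) he.
Qed.

Lemma connect_ball u v : connect e u v -> exists2 k, (k < #|T|)%N & v \in ball e k u.
Proof.
move/connectP => [p hp ->].
case: (shortenP hp) => p' hp' hu _.
exists (size p'); last exact: ball_path.
by have := card_uniqP hu; have := max_card (mem (u :: p')); move=> h1 h2; rewrite h2 /= in h1.
Qed.

Lemma dist_ball u v : connect e u v -> v \in ball e (dist e u v) u.
Proof.
move=> /connect_ball [k hk hv].
have hh : has (fun k => v \in ball e k u) (iota 0 #|T|).
  by apply/hasP; exists k => //; rewrite mem_iota.
have := nth_find 0 hh; rewrite /dist nth_iota ?add0n //.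
by rewrite -[X in (_ < X)%N](size_iota 0 #|T|) -has_find.
Qed.

End Ball.
Lemma target_spec (T : finType) (nbrs : T -> seq T) (l : T -> nat) u v0 :
  v0 \in nbrs u -> target nbrs l u \in nbrs u /\
   forall w, w \in nbrs u -> (l (target nbrs l u) <= l w)%N.
Proof.
move=> hv0.
case: (@arg_minnP _ v0 (mem (nbrs u)) l hv0) => m hm hmin.
set P := (fun v => all (fun w => l v <= l w)%N (nbrs u)).
have hP : has P (nbrs u) by apply/hasP; exists m => //; apply/allP => w hw; exact: hmin.
have := nth_find u hP; rewrite has_find in hP.
rewrite /target -/P; set t := nth _ _ _ => /allP ht; split => //.
exact: mem_nth.
Qed.
Section Alg.
Variables (T : finType) (nbrs : T -> seq T) (l : T -> nat) (acc : T -> option T).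
Hypothesis acc_ok : valid_acceptance nbrs l acc.

Let a x : rat := (l x)%:R.
Let p w : rat := (pval nbrs l w)%:R.
Let In x : rat := if acc x is Some w then p w else 0.
Let Out x : rat := \sum_(v | acc v == Some x) p x.
Definition Fv v : rat := if acc v is Some w then 2 * (pval nbrs l w)%:R * ((l w)%:R - (l v)%:R - (pval nbrs l w)%:R) else 0.

Lemma exch (g : T -> rat) :
  \sum_x \sum_(v | acc v == Some x) g x = \sum_v (if acc v is Some w then g w else 0).
Proof.
under eq_bigr do rewrite big_mkcond; rewrite exchange_big /=; apply: eq_bigr => v _.
rewrite -big_mkcond; case: (acc v) => [w|]; last by rewrite big_pred0.
by rewrite (big_pred1 w) // => x; rewrite eq_sym.
Qed.

Lemma newload_rat x : ((new_load nbrs l acc x)%:~R : rat) = a x + In x - Out x.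
Proof.
rewrite /new_load /a /In /Out rmorphB rmorphD rmorph_sum /=.
by case: (acc x).
Qed.

Lemma sum_delta : \sum_x (In x - Out x) = 0.
Proof.
rewrite sumrB /Out exch /In; apply/eqP; rewrite subr_eq0; apply/eqP.
by apply: eq_bigr => v _.
Qed.

Lemma Out_sq x : Out x ^+ 2 = \sum_(v | acc v == Some x) p x ^+ 2.
Proof.
rewrite /Out; case: (pickP (fun v => acc v == Some x)) => [v0 hv0|h0]; last first.
  by rewrite !big_pred0 // expr0n.
have E : forall v, (acc v == Some x) = (v == v0).
  move=> v; apply/idP/idP => [/eqP hv|/eqP ->//].
  have [_ /(_ x hv) [/andP [_ /eqP t1] _]] := acc_ok v.
  have [_ /(_ x (eqP hv0)) [/andP [_ /eqP t2] _]] := acc_ok v0.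
  by rewrite -t1 -t2.
by rewrite !(eq_bigl _ _ E) !big_pred1_eq.
Qed.

Definition Gv v : rat := if acc v is Some w then 2 * p w * (a w - a v) else 0.
Definition Hv v : rat := if acc v is Some w then 2 * p w ^+ 2 else 0.

Lemma pot_decr :
  potential (fun u => (l u)%:Z) - potential (new_load nbrs l acc)
  = \sum_v Gv v - \sum_x (In x - Out x) ^+ 2.
Proof.
have Hav : avg_load (new_load nbrs l acc) = avg_load (fun u => (l u)%:Z).
  rewrite /avg_load; congr (_ / _).
  under eq_bigr do rewrite newload_rat -addrA.
  by rewrite big_split /= sum_delta addr0.
rewrite /potential Hav; set c := avg_load _.
under [X in _ - X]eq_bigr do rewrite newload_rat.

have -> : \sum_i (((l i)%:Z)%:~R - c) ^+ 2 - \sum_i (a i + In i - Out i - c) ^+ 2 =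
  \sum_i (2 * c * (In i - Out i)) - \sum_i (2 * a i * (In i - Out i)) - \sum_i (In i - Out i) ^+ 2.
  rewrite -!sumrB; apply: eq_bigr => i _; rewrite /a /=. ring.
rewrite -mulr_sumr sum_delta mulr0 sub0r; congr (_ - _).
have h1 : \sum_i a i * In i = \sum_v (if acc v is Some w then a v * p w else 0).
  by apply: eq_bigr => v _; rewrite /In; case: (acc v) => // *; rewrite mulr0.
have h2 : \sum_i a i * Out i = \sum_v (if acc v is Some w then a w * p w else 0).
  by under eq_bigr do rewrite /Out mulr_sumr; rewrite exch.
have -> : \sum_i 2 * a i * (In i - Out i) = 2 * \sum_i a i * In i - 2 * \sum_i a i * Out i.
  by rewrite !mulr_sumr -sumrB; apply: eq_bigr => i _; ring.
rewrite h1 h2 !mulr_sumr -sumrB -sumrN; apply: eq_bigr => v _; rewrite /Gv.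
by case: (acc v) => [w|]; rewrite ?mulr0 ?subr0 ?oppr0 //; ring.
Qed.

Lemma delta_sq : \sum_x (In x - Out x) ^+ 2 <= \sum_v Hv v.
Proof.
apply: (@le_trans _ _ (\sum_x (In x ^+ 2 + Out x ^+ 2))).
  apply: ler_sum => x _.
  have i0 : 0 <= In x by rewrite /In; case: (acc x) => // *; exact: ler0n.
  have o0 : 0 <= Out x by apply: sumr_ge0 => *; exact: ler0n.
  nra.
rewrite big_split /=.
under [X in _ + X]eq_bigr do rewrite Out_sq; rewrite exch -big_split /=.
rewrite le_eqVlt; apply/orP; left; apply/eqP; apply: eq_bigr => v _; rewrite /In /Hv; case: (acc v) => [w|]; last by rewrite expr0n /= add0r.
by rewrite mulr2n mulrDl !mul1r.
Qed.

Lemma decr_F :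
  \sum_v Fv v <= potential (fun u => (l u)%:Z) - potential (new_load nbrs l acc).
Proof.
rewrite pot_decr.
apply: (@le_trans _ _ (\sum_v Gv v - \sum_v Hv v)); last by rewrite lerD2l lerN2 delta_sq.
rewrite -sumrB; rewrite le_eqVlt; apply/orP; left; apply/eqP; apply: eq_bigr => v _; rewrite /Fv /Gv /Hv.
by case: (acc v) => [w|]; rewrite ?subr0 // /p /a; ring.
Qed.

Lemma Fv_some v w : acc v = Some w -> 2 * ((pval nbrs l w)%:R) ^+ 2 <= Fv v.
Proof.
move=> hv; rewrite /Fv hv.
have [_ /(_ w hv) [/andP [_ /eqP tw] _]] := acc_ok v.
have hq : pval nbrs l w = ((l w - l v) %/ 2)%N by rewrite /pval tw.
rewrite hq; set q := ((l w - l v) %/ 2)%N.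
case: (leqP (l v) (l w)) => h.
  have h2 : (2 * q <= l w - l v)%N by rewrite /q; lia.
  have : (2 * q)%:R <= ((l w - l v)%N)%:R :> rat by rewrite ler_nat.
  rewrite natrB // natrM => h3.
  have : 0 <= q%:R :> rat by exact: ler0n.
  nra.
have -> : q = 0%N by rewrite /q; lia.
by rewrite expr0n /= !mulr0 mul0r.
Qed.

Lemma Fv_ge0 v : 0 <= Fv v.
Proof.
case E: (acc v) => [w|]; last by rewrite /Fv E.
apply: le_trans (Fv_some E); apply: mulr_ge0 => //; exact: sqr_ge0.
Qed.

Lemma Fv_prop x v : proposal nbrs l x v -> 2 * ((pval nbrs l x)%:R) ^+ 2 <= Fv v.
Proof.
move=> hp.
case E: (acc v) => [w|].
  have [_ /(_ w E) [_ hmax]] := acc_ok v.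
  apply: le_trans (Fv_some E).
  have := hmax x hp; rewrite -(ler_nat rat) => h.
  have : 0 <= (pval nbrs l x)%:R :> rat by exact: ler0n.
  nra.
have [[/(_ E) hn _] _] := acc_ok v.
by move: (hn x); rewrite hp.
Qed.

End Alg.
Lemma cauchy (m : nat) (w : 'I_m -> rat) :
  (\sum_k w k) ^+ 2 <= m%:R * \sum_k w k ^+ 2.
Proof.
case: m w => [|m] w; first by rewrite !big_ord0 expr0n.
set W := \sum_k w k; set c := W / m.+1%:R.
have hm : (0 : rat) < m.+1%:R by rewrite ltr0n.
have h0 : 0 <= \sum_k (w k - c) ^+ 2 by apply: sumr_ge0 => *; exact: sqr_ge0.
have E : \sum_k (w k - c) ^+ 2 = \sum_k w k ^+ 2 - 2 * c * W + m.+1%:R * c ^+ 2.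
  rewrite /W mulr_sumr -sumrB.
  have -> : m.+1%:R * c ^+ 2 = \sum_(k < m.+1) c ^+ 2 by rewrite sumr_const card_ord mulr_natl.
  by rewrite -big_split /=; apply: eq_bigr => k _; ring.
have Wc : W = m.+1%:R * c by rewrite /c mulrC divfK // gt_eqF.
rewrite E Wc in h0 *.
nra.
Qed.

Lemma final_arith (m D K : nat) (z : 'I_m -> nat) :
  (m <= D)%N -> (\sum_k z k)%N = K -> (2 * D <= K)%N ->
  (K%:R ^+ 2 / (8 * D%:R) : rat) <= \sum_k 2 * ((z k %/ 2)%:R) ^+ 2.
Proof.
move=> hmD hz hK.
case: (posnP m) => [m0|mpos].
  subst m; rewrite big_ord0 in hz; subst K; rewrite expr0n /= mul0r big_ord0 //.
set w := fun k => ((z k - 1)%N)%:R : rat.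
have hw : forall k, w k ^+ 2 <= 4 * ((z k %/ 2)%:R) ^+ 2.
  move=> k; rewrite /w.
  have : (z k - 1 <= 2 * (z k %/ 2))%N by lia.
  rewrite -(ler_nat rat) natrM => h.
  have : 0 <= ((z k - 1)%N)%:R :> rat by exact: ler0n.
  nra.
have hW : (K <= \sum_k (z k - 1) + m)%N.
  rewrite -hz -[X in (_ + X)%N](card_ord m) -sum1_card -big_split /=.
  by apply: leq_sum => k _; lia.
have hW' : (K%:R : rat) <= 2 * \sum_k w k.
  rewrite /w -natr_sum -natrM ler_nat; lia.
have hc := cauchy w.
have hD : (0 : rat) < D%:R by rewrite ltr0n; lia.
have hmD' : (m%:R : rat) <= D%:R by rewrite ler_nat.
have hS : \sum_k w k ^+ 2 <= \sum_k 4 * ((z k %/ 2)%:R) ^+ 2 :> rat by apply: ler_sum => k _; exact: hw.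
have hS0 : 0 <= \sum_k w k by apply: sumr_ge0 => *; exact: ler0n.
have hS1 : 0 <= \sum_k w k ^+ 2 by apply: sumr_ge0 => *; exact: sqr_ge0.
rewrite -mulr_sumr in hS; rewrite -mulr_sumr.
set Q := \sum_i ((z i %/ 2)%:R : rat) ^+ 2 in hS *.
rewrite ler_pdivrMr; last by rewrite mulr_gt0 // ltr0n.
have hK0 : (0 : rat) <= K%:R by exact: ler0n.
set S := \sum_k w k in hW' hS0 hc.
set S2 := \sum_k w k ^+ 2 in hS hS1 hc.
have h1 : (K%:R : rat) ^+ 2 <= 4 * S ^+ 2 by nra.
have hm0 : (0 : rat) <= m%:R by exact: ler0n.
have h2 : m%:R * S2 <= D%:R * S2 by rewrite -subr_ge0 -mulrBl mulr_ge0 // subr_ge0.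
have h3 : D%:R * S2 <= D%:R * (4 * Q) by rewrite -subr_ge0 -mulrBr mulr_ge0 ?subr_ge0 // ltW.
nra.
Qed.

Unset Implicit Arguments.

Theorem lemma5 (T : finType) (e : rel T)
  (e_sym : symmetric e) (e_irr : irreflexive e)
  (e_conn : forall u v : T, connect e u v)
  (n_ge2 : (1 < #|T|)%N)
  (nbrs : T -> seq T)
  (nbrs_uniq : forall u, uniq (nbrs u))
  (nbrs_adj : forall u v, (v \in nbrs u) = e u v)
  (l : T -> nat) (acc : T -> option T)
  (acc_ok : valid_acceptance nbrs l acc)
  (hK : (2 * diameter e <= discrepancy l)%N) :
  potential (fun u => (l u)%:Z) - potential (new_load nbrs l acc)
    >= ((discrepancy l)%:R ^+ 2) / (8 * (diameter e)%:R).
Proof.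
have [x0 _] : exists x0 : T, true by case/card_gt0P: (ltnW n_ge2) => x _; exists x.
case: (@arg_maxnP T x0 xpredT l isT) => u _ hu.
case: (@arg_minnP T x0 xpredT l isT) => v _ hv.
have hLmax : Lmax l = l u.
  apply/eqP; rewrite eqn_leq leq_bigmax andbT; apply/bigmax_leqP => i _; exact: hu.
have hLmin : Lmin l = l v.
  apply/eqP; rewrite eqn_leq; apply/andP; split.
    have gen : forall r : seq T, v \in r -> (\big[minn/Lmax l]_(i <- r) l i <= l v)%N.
      elim => [|y r IH] //; rewrite inE big_cons => /orP [/eqP <-|hr].
        exact: geq_minl.
      exact: leq_trans (geq_minr _ _) (IH hr).
    by apply: gen; rewrite mem_index_enum.
  rewrite /Lmin; apply: (big_ind (fun m => l v <= m)%N).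
  - by rewrite hLmax hv.
  - by move=> a b ha hb; rewrite leq_min ha hb.
  - by move=> i _; exact: hv.
have hKd : discrepancy l = (l u - l v)%N by rewrite /discrepancy hLmax hLmin.
set m := dist e u v.
have hvb : v \in ball e m u by exact: dist_ball.
have hmD : (m <= diameter e)%N.
  rewrite /diameter; apply: (leq_trans _ (leq_bigmax u)).
  exact: (leq_bigmax (F := fun w => dist e u w) v).
pose bm k := [arg min_(x < u in ball e k u) l x].
have bmP : forall k, bm k \in ball e k u /\ forall y, y \in ball e k u -> (l (bm k) <= l y)%N.
  move=> k; rewrite /bm; case: arg_minnP => [|x hx hmin]; [exact: ball_center | by split].
pose M k := l (bm k).
have hMmono : forall j k, (j <= k)%N -> (M k <= M j)%N.
  move=> j k hjk; rewrite /M; apply: (proj2 (bmP k)).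
  exact: (subsetP (ball_mono e u hjk)) (proj1 (bmP j)).
have hM0 : M 0%N = l u.
  have := proj1 (bmP 0%N); rewrite /ball /= in_set1 => /eqP.
  by rewrite /M => ->.
have hMm : M m = l v.
  apply/eqP; rewrite eqn_leq (proj2 (bmP m) v hvb) hv //.
pose z k := (M k - M k.+1)%N.
have hzsum0 : forall n, (\sum_(k < n) z k)%N = (M 0%N - M n)%N.
  elim => [|n IH]; first by rewrite big_ord0 subnn.
  rewrite big_ord_recr /= IH /z.
  have := hMmono _ _ (leq0n n); have := hMmono _ _ (leqnSn n); lia.
have hzsum : (\sum_(k < m) z k)%N = discrepancy l by rewrite hzsum0 hM0 hMm hKd.
pose xk k := odflt u [pick x in ball e k u | e x (bm k.+1)].
have hxk : forall k, (0 < z k)%N -> xk k \in ball e k u /\ e (xk k) (bm k.+1).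
  move=> k hz; rewrite /xk; case: pickP => [x /andP [h1 h2] //|hn].
  exfalso.
  have hy := proj1 (bmP k.+1).
  rewrite ballS in_setU in hy; case/orP: hy => hy.
    have := proj2 (bmP k) _ hy; rewrite /z /M in hz; lia.
  rewrite inE in hy; case/existsP: hy => x /andP [h1 h2].
  by move: (hn x); rewrite h1 h2.
pose tk k := target nbrs l (xk k).
have htk : forall k, (0 < z k)%N ->
   tk k \in ball e k.+1 u /\ (l (tk k) <= M k.+1)%N.
  move=> k hz; have [h1 h2] := hxk k hz.
  have hn : bm k.+1 \in nbrs (xk k) by rewrite nbrs_adj.
  have [ht1 ht2] := target_spec l hn.
  split; last exact: ht2.
  by apply: ball_step h1 _; rewrite -nbrs_adj.
have hprop : forall k, (2 <= z k)%N ->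
   proposal nbrs l (xk k) (tk k) /\ (z k %/ 2 <= pval nbrs l (xk k))%N.
  move=> k hz; have hz0 : (0 < z k)%N by lia.
  have [h1 h2] := hxk k hz0; have [_ h4] := htk k hz0.
  have h5 := proj2 (bmP k) _ h1.
  split.
    rewrite /proposal eqxx andbT; apply/hasP; exists (bm k.+1); first by rewrite nbrs_adj.
    rewrite /z /M in hz h4 h5 *; lia.
  rewrite /pval; apply: leq_div2r; rewrite /z /M in h4 h5 *; rewrite -/(tk k); lia.
pose S := [set k : 'I_m | (2 <= z k)%N].
have hinj : {in S &, injective (fun k : 'I_m => tk k)}.
  have aux : forall j k : 'I_m, (2 <= z j)%N -> (2 <= z k)%N -> (j < k)%N -> tk j <> tk k.
    move=> j k hj hk hjk he.
    have [hb1 _] := htk j (ltnW hj).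
    have [_ hb2] := htk k (ltnW hk).
    have hb3 := (subsetP (ball_mono e u hjk)) _ hb1.
    have := proj2 (bmP k) _ hb3; rewrite he.
    rewrite /z /M in hk hb2 *; lia.
  move=> j k; rewrite !inE => hj hk he; apply/val_inj => /=.
  case: (ltngtP j k) => // hjk; [exact: (False_ind _ (aux _ _ hj hk hjk he)) | exact: (False_ind _ (aux _ _ hk hj hjk (esym he)))].
apply: le_trans (decr_F acc_ok).
apply: le_trans (final_arith (z := fun k : 'I_m => z k) hmD hzsum hK) _.
rewrite (bigID (fun k => k \in S)) /=.
have -> : \sum_(k < m | k \notin S) 2 * ((z k %/ 2)%:R : rat) ^+ 2 = 0.
  apply: big1 => k; rewrite inE -ltnNge => h.
  by rewrite divn_small // expr0n /= mulr0.
rewrite addr0.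
apply: (@le_trans _ _ (\sum_(k in S) Fv nbrs l acc (tk k))).
  apply: ler_sum => k; rewrite inE => hk; have [hp hd] := hprop k hk.
  apply: le_trans (Fv_prop acc_ok hp).
  move: hd; rewrite -(ler_nat rat) => hd.
  have : 0 <= ((z k %/ 2)%N)%:R :> rat by exact: ler0n.
  nra.
rewrite -(big_imset _ hinj) /=.
rewrite [X in _ <= X](bigID (fun v => v \in (fun k : 'I_m => tk k) @: S)) /=.
rewrite lerDl; apply: sumr_ge0 => w _; exact: Fv_ge0.
Qed.
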